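(* Let $\mathcal F,\mathcal G,\mathcal H$ be exact categories and $\gamma\colon\mathcal F\to\mathcal G$, $\eta\colon\mathcal G\to\mathcal H$ exact functors. (a) If $\eta\gamma$ reflects admissible epimorphisms (resp. admissible monomorphisms, resp. exact sequences), then so does $\gamma$. If $\eta\gamma$ satisfies ($*'$), then so does $\eta$. (b) If $\gamma$ satisfies ($*'$) and $\eta\gamma$ satisfies (i$'$), then $\eta$ satisfies (i$'$). (c) If $\gamma$ satisfies ($*'$) and $\eta\gamma$ satisfies ($**'$), then $\eta$ satisfies ($**'$). (d) If $\gamma$ satisfies ($*'$), and $\eta\gamma$ satisfies (i$'$), (ii$'$), ($*'$), ($**'$) and reflects admissible epimorphisms, then $\eta$ satisfies (ii$'$).
   Context: Exact categories in Quillen's sense. For an exact functor $\theta\colon\mathcal A\to\mathcal B$: (i$'$) for any $X\in\mathcal A$ and any admissible epimorphism $T\to\theta(X)$ in $\mathcal B$ there exist an admissible epimorphism $Z\to X$ in $\mathcal A$ and a morphism $\theta(Z)\to T$ such that $\theta(Z)\to T\to\theta(X)$ equals $\theta(Z\to X)$; (ii$'$) for any $X,Y\in\mathcal A$ and any morphism $g\colon\theta(X)\to\theta(Y)$ there exist an admissible epimorphism $p\colon X'\to X$ and a morphism $h\colon X'\to Y$ in $\mathcal A$ with $g\circ\theta(p)=\theta(h)$; ($*'$) for any $T\in\mathcal B$ there exist $U\in\mathcal A$ and an admissible epimorphism $\theta(U)\to T$; ($**'$) for any $X\in\mathcal A$ and any morphism $g\colon\theta(X)\to T$ in $\mathcal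 B$ there exist an admissible epimorphism $p\colon X'\to X$ in $\mathcal A$, a morphism $h\colon X'\to S$ in $\mathcal A$ and an admissible epimorphism $e\colon\theta(S)\to T$ in $\mathcal B$ with $g\circ\theta(p)=e\circ\theta(h)$. *)

(* Defs.v *)
From HB Require Import structures.
From mathcomp Require Import all_boot all_algebra.
Set Implicit Arguments. Unset Strict Implicit. Unset Printing Implicit Defensive.
Import GRing.Theory.
Local Open Scope ring_scope.

Record PreAddCat := {
  ob : Type;
  hom : ob -> ob -> zmodType;
  comp : forall a b c : ob, hom b c -> hom a b -> hom a c;
  idm : forall a : ob, hom a a;
  compA : forall a b c d (h : hom c d) (g : hom b c) (f : hom a b),
      comp h (comp g f) = comp (comp h g) f;
  comp1m : forall a b (f : hom a b), comp (idm b) f = f;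
  compm1 : forall a b (f : hom a b), comp f (idm a) = f;
  compDl : forall a b c (g1 g2 : hom b c) (f : hom a b),
      comp (g1 + g2) f = comp g1 f + comp g2 f;
  compDr : forall a b c (g : hom b c) (f1 f2 : hom a b),
      comp g (f1 + f2) = comp g f1 + comp g f2
}.
Arguments comp {p a b c}.
Arguments idm {p}.

Section Basic.
Variable C : PreAddCat.

Definition is_zero_obj (z : ob C) : Prop :=
  forall a : ob C, (forall f g : hom z a, f = g) /\ (forall f g : hom a z, f = g).

Definition is_biproduct (a b c : ob C) (i1 : hom a c) (i2 : hom b c)
    (p1 : hom c a) (p2 : hom c b) : Prop :=
  [/\ comp p1 i1 = idm a, comp p2 i2 = idm b, comp p2 i1 = 0, comp p1 i2 = 0
    & comp i1 p1 + comp i2 p2 = idm c].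

Definition is_kernel (a b c : ob C) (i : hom a b) (p : hom b c) : Prop :=
  comp p i = 0 /\
  forall (t : ob C) (x : hom t b), comp p x = 0 ->
    exists u : hom t a, comp i u = x /\ forall u' : hom t a, comp i u' = x -> u' = u.

Definition is_cokernel (a b c : ob C) (i : hom a b) (p : hom b c) : Prop :=
  comp p i = 0 /\
  forall (t : ob C) (x : hom b t), comp x i = 0 ->
    exists u : hom c t, comp u p = x /\ forall u' : hom c t, comp u' p = x -> u' = u.

Definition is_iso (a b : ob C) (f : hom a b) : Prop :=
  exists g : hom b a, comp g f = idm a /\ comp f g = idm b.

(* commutative square  A --f--> B ; A --g--> A' ; A' --f'--> B' ; B --g'--> B'
   which is a pushout *)
Definition is_pushout (a b a' b' : ob C) (f : hom a b) (g : hom a a')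
    (f' : hom a' b') (g' : hom b b') : Prop :=
  comp g' f = comp f' g /\
  forall (t : ob C) (x : hom b t) (y : hom a' t), comp x f = comp y g ->
    exists u : hom b' t, (comp u g' = x /\ comp u f' = y) /\
      forall u' : hom b' t, comp u' g' = x -> comp u' f' = y -> u' = u.

(* commutative square  B' --g'--> B ; B' --f'--> A' ; B --f--> A ; A' --g--> A
   which is a pullback of f along g *)
Definition is_pullback (a b a' b' : ob C) (f : hom b a) (g : hom a' a)
    (f' : hom b' a') (g' : hom b' b) : Prop :=
  comp f g' = comp g f' /\
  forall (t : ob C) (x : hom t b) (y : hom t a'), comp f x = comp g y ->
    exists u : hom t b', (comp g' u = x /\ comp f' u = y) /\
      forall u' : hom t b', comp g' u' = x -> comp f' u' = y -> u' = u.
End Basic.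

Record AddCat := {
  acat :> PreAddCat;
  has_zero : exists z : ob acat, is_zero_obj z;
  has_biprod : forall a b : ob acat, exists (c : ob acat) (i1 : hom a c) (i2 : hom b c)
      (p1 : hom c a) (p2 : hom c b), is_biproduct i1 i2 p1 p2
}.

Section ExactAx.
Variable C : PreAddCat.
Variable conf : forall a b c : ob C, hom a b -> hom b c -> Prop.

Definition adm_mono_of (a b : ob C) (i : hom a b) : Prop :=
  exists (c : ob C) (p : hom b c), conf i p.
Definition adm_epi_of (b c : ob C) (p : hom b c) : Prop :=
  exists (a : ob C) (i : hom a b), conf i p.

Definition exact_axioms : Prop :=
      (forall a b c (i : hom a b) (p : hom b c), conf i p -> is_kernel i p /\ is_cokernel i p) /\
      (forall a b c a' b' c' (i : hom a b) (p : hom b c) (i' : hom a' b') (p' : hom b' c')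
          (al : hom a a') (be : hom b b') (ga : hom c c'),
          conf i p -> is_iso al -> is_iso be -> is_iso ga ->
          comp be i = comp i' al -> comp ga p = comp p' be -> conf i' p') /\
      (forall a, adm_mono_of (idm a) /\ adm_epi_of (idm a)) /\
      (forall a b c (f : hom a b) (g : hom b c), adm_mono_of f -> adm_mono_of g -> adm_mono_of (comp g f)) /\
      (forall a b c (f : hom a b) (g : hom b c), adm_epi_of f -> adm_epi_of g -> adm_epi_of (comp g f)) /\
      (forall a b a' (f : hom a b) (g : hom a a'), adm_mono_of f ->
          exists (b' : ob C) (f' : hom a' b') (g' : hom b b'),
            is_pushout f g f' g' /\ adm_mono_of f') /\
      (forall a b a' (f : hom b a) (g : hom a' a), adm_epi_of f ->
          exists (b' : ob C) (f' : hom b' a') (g' : hom b' b),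
            is_pullback f g f' g' /\ adm_epi_of f').
End ExactAx.

Record ExactCat := {
  ecat :> AddCat;
  conf : forall a b c : ob ecat, hom a b -> hom b c -> Prop;  (* the exact sequences (conflations) *)
  ecat_ax : exact_axioms conf
}.
Arguments conf {e a b c}.

Definition adm_mono (E : ExactCat) (a b : ob E) (i : hom a b) := adm_mono_of (@conf E) i.
Definition adm_epi (E : ExactCat) (b c : ob E) (p : hom b c) := adm_epi_of (@conf E) p.

Record FunData (A B : PreAddCat) := {
  fob : ob A -> ob B;
  fmor : forall a b : ob A, hom a b -> hom (fob a) (fob b)
}.
Arguments fob {A B} f _.
Arguments fmor {A B} f {a b} _.

Definition fcomp (A B C : PreAddCat) (eta : FunData B C) (ga : FunData A B) : FunData A C :=
  {| fob := fun a => fob eta (fob ga a);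
     fmor := fun a b f => fmor eta (fmor ga f) |}.

Definition is_exact_functor (A B : ExactCat) (F : FunData A B) : Prop :=
  [/\ (forall a, fmor F (idm a) = idm (fob F a)),
      (forall a b c (g : hom b c) (f : hom a b), fmor F (comp g f) = comp (fmor F g) (fmor F f)),
      (forall a b (f g : hom a b), fmor F (f + g) = fmor F f + fmor F g)
    & (forall a b c (i : hom a b) (p : hom b c), conf i p -> conf (fmor F i) (fmor F p))].

Record ExactFunctor (A B : ExactCat) := {
  efun :> FunData A B;
  efun_exact : is_exact_functor efun
}.

Section Props.
Variables (A B : ExactCat) (F : FunData A B).

Definition reflects_adm_epi : Prop :=
  forall (x y : ob A) (f : hom x y), adm_epi (fmor F f) -> adm_epi f.
Definition reflects_adm_mono : Prop :=
  forall (x y : ob A) (f : hom x y), adm_mono (fmor F f) -> adm_mono f.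
Definition reflects_exact : Prop :=
  forall (x y z : ob A) (i : hom x y) (p : hom y z), conf (fmor F i) (fmor F p) -> conf i p.

Definition cond_i' : Prop :=
  forall (X : ob A) (T : ob B) (t : hom T (fob F X)), adm_epi t ->
    exists (Z : ob A) (z : hom Z X) (m : hom (fob F Z) T),
      adm_epi z /\ comp t m = fmor F z.

Definition cond_ii' : Prop :=
  forall (X Y : ob A) (g : hom (fob F X) (fob F Y)),
    exists (X' : ob A) (p : hom X' X) (h : hom X' Y),
      adm_epi p /\ comp g (fmor F p) = fmor F h.

Definition cond_star' : Prop :=
  forall T : ob B, exists (U : ob A) (e : hom (fob F U) T), adm_epi e.

Definition cond_starstar' : Prop :=
  forall (X : ob A) (T : ob B) (g : hom (fob F X) T),
    exists (X' S : ob A) (p : hom X' X) (h : hom X' S) (e : hom (fob F S) T),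
      [/\ adm_epi p, adm_epi e & comp g (fmor F p) = comp e (fmor F h)].
End Props.

(* Main.v *)
Require Import Defs.
From mathcomp Require Import all_boot all_algebra.

Lemma ef_epi (A B : ExactCat) (F : ExactFunctor A B) (x y : ob A) (f : Defs.hom x y) :
  adm_epi f -> adm_epi (fmor F f).
Proof.
case: (efun_exact F) => _ _ _ Hc [a [i Hi]].
exists (fob F a), (fmor F i); exact: Hc.
Qed.

Lemma ef_mono (A B : ExactCat) (F : ExactFunctor A B) (x y : ob A) (f : Defs.hom x y) :
  adm_mono f -> adm_mono (fmor F f).
Proof.
case: (efun_exact F) => _ _ _ Hc [a [i Hi]].
exists (fob F a), (fmor F i); exact: Hc.
Qed.

Lemma ef_comp (A B : ExactCat) (F : ExactFunctor A B) (a b c : ob A) (g : Defs.hom b c) (f : Defs.hom a b) :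
  fmor F (Defs.comp g f) = Defs.comp (fmor F g) (fmor F f).
Proof. by case: (efun_exact F). Qed.

Lemma epi_comp (E : ExactCat) (a b c : ob E) (f : Defs.hom a b) (g : Defs.hom b c) :
  @adm_epi E _ _ f -> adm_epi g -> adm_epi (Defs.comp g f).
Proof.
have [_ [_ [_ [_ [Hc _]]]]] := ecat_ax E. exact: Hc.
Qed.

Lemma pb_ex (E : ExactCat) (a b a' : ob E) (f : Defs.hom b a) (g : Defs.hom a' a) :
  adm_epi f -> exists (b' : ob E) (f' : Defs.hom b' a') (g' : Defs.hom b' b),
    Defs.comp f g' = Defs.comp g f' /\ adm_epi f'.
Proof.
have [_ [_ [_ [_ [_ [_ Hpb]]]]]] := ecat_ax E.
move=> hf; have [b' [f' [g' [[H1 _] H2]]]] := Hpb _ _ _ f g hf.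
by exists b', f', g'.
Qed.

Arguments ef_epi {A B} F {x y f}.
Arguments ef_mono {A B} F {x y f}.
Arguments ef_comp {A B} F {a b c} g f.
Arguments epi_comp {E a b c f g}.
Arguments pb_ex {E a b a'} f g.

Theorem lemma0p8 (F G H : ExactCat) (gam : ExactFunctor F G) (eta : ExactFunctor G H) :
  let eg := fcomp eta gam in
  (* (a) *)
  (reflects_adm_epi eg -> reflects_adm_epi gam) /\
      (reflects_adm_mono eg -> reflects_adm_mono gam) /\
      (reflects_exact eg -> reflects_exact gam) /\
      (cond_star' eg -> cond_star' eta) /\
  (* (b) *)
      (cond_star' gam -> cond_i' eg -> cond_i' eta) /\
  (* (c) *)
      (cond_star' gam -> cond_starstar' eg -> cond_starstar' eta) /\
  (* (d) *)
    (cond_star' gam -> cond_i' eg -> cond_ii' eg -> cond_star' eg ->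
       cond_starstar' eg -> reflects_adm_epi eg -> cond_ii' eta).
Proof.
move=> eg; rewrite /eg {eg}.
split.
  move=> R x y f hf; exact: (R _ _ _ (ef_epi eta hf)).
split.
  move=> R x y f hf; exact: (R _ _ _ (ef_mono eta hf)).
split.
  move=> R x y z i p hc; apply: R.
  by case: (efun_exact eta) => _ _ _ Hc; apply: Hc.
split.
  move=> S T; have [U [e he]] := S T; by exists (fob gam U), e.
split.
  move=> Sg Ii X T t ht.
  have [U [e he]] := Sg X.
  have [T' [t' [g' [Hcm ht']]]] := pb_ex t (fmor eta e) ht.
  have [Z [z [m [hz Hm]]]] := Ii U T' t' ht'.
  exists (fob gam Z), (Defs.comp e (fmor gam z)), (Defs.comp g' m); split.
    by apply: epi_comp => //; apply: ef_epi.
  rewrite Defs.compA Hcm -Defs.compA Hm ef_comp //.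
split.
  move=> Sg SS X T g.
  have [U [e he]] := Sg X.
  have [X' [S [p [h [e2 [hp he2 Heq]]]]]] := SS U T (Defs.comp g (fmor eta e)).
  exists (fob gam X'), (fob gam S), (Defs.comp e (fmor gam p)), (fmor gam h), e2; split => //.
    by apply: epi_comp => //; apply: ef_epi.
  by rewrite ef_comp Defs.compA -Heq.
move=> Sg Ii IIi _ _ _ X Y g.
have [U [eX heX]] := Sg X.
have [V [eY heY]] := Sg Y.
have [P [q [r [Hcm hq]]]] := pb_ex (fmor eta eY) (Defs.comp g (fmor eta eX)) (ef_epi eta heY).
have [Z [z [m [hz Hm]]]] := Ii U P q hq.
have [Z' [p' [h' [hp' Hh']]]] := IIi Z V (Defs.comp r m).
exists (fob gam Z'), (Defs.comp eX (Defs.comp (fmor gam z) (fmor gam p'))), (Defs.comp eY (fmor gam h')).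
split.
  apply: epi_comp => //; apply: epi_comp; exact: ef_epi.
rewrite /= in Hm Hh'.
rewrite !ef_comp -Hh' -Hm !Defs.compA Hcm.
by [].
Qed.
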